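(* Let $\kappa$ be an ordinal. Then $\mathbb C(\kappa)$ forces that there is no sequence $\langle f_\alpha:\alpha<(\mathfrak c^+)^V\rangle$ of elements of ${}^\omega\omega$ which is $\ll$-increasing, i.e. such that $f_\alpha\ll f_\beta$ whenever $\alpha<\beta<(\mathfrak c^+)^V$.
   Context: $\mathfrak c=2^{\aleph_0}$ computed in the ground model $V$. $C(\kappa)$ is the poset of finite partial functions from $\kappa$ to $\{0,1\}$ ordered by reverse extension, and $\mathbb C(\kappa)=RO(C(\kappa))$ is the Cohen algebra. For $f,g\in{}^\omega\omega$, $f\ll g$ means that $f(n)\le g(n)$ for all but finitely many $n\in\omega$ and $f(n)<g(n)$ for infinitely many $n\in\omega$. *)

(* Defs.v *)
(* Boolean-valued semantics of Cohen forcing C(kappa), with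
   the Cohen algebra RO(C(kappa)) represented by regular open sets of
   conditions. *)
From Stdlib Require Import List.

Section Cohen.
Variable K : Type.

Definition cond : Type :=
  { p : K -> option bool | exists s : list K, forall k, p k <> None -> In k s }.

Definition cle (q p : cond) : Prop :=
  forall k b, proj1_sig p k = Some b -> proj1_sig q k = Some b.

Definition cset := cond -> Prop.

(* regularization int(cl U) in the order topology *)
Definition reg (U : cset) : cset :=
  fun p => forall q, cle q p -> exists r, cle r q /\ U r.

Definition open_set (U : cset) : Prop := forall p q, U p -> cle q p -> U q.

Definition regular_open (U : cset) : Prop :=
  open_set U /\ forall p, reg U p -> U p.

Definition bmeet (U V : cset) : cset := fun p => U p /\ V p.
Definition bsup (U : nat -> cset) : cset := reg (fun p => exists i, U i p).
Definition binf (U : nat -> cset) : cset := fun p => forall i, U i p.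
Definition bone : cset := fun _ => True.

(* A (nice) C(K)-name for an element of ^omega omega:
   val n m is the Boolean value [[ f(n) = m ]]. *)
Record name := {
  val : nat -> nat -> cset;
  val_ro : forall n m, regular_open (val n m);
  val_disj : forall n m m' p, m <> m' -> val n m p -> val n m' p -> False;
  val_total : forall n p, bsup (val n) p
}.

Definition val_le (f g : name) (n : nat) : cset :=
  reg (fun p => exists m m', m <= m' /\ val f n m p /\ val g n m' p).
Definition val_lt (f g : name) (n : nat) : cset :=
  reg (fun p => exists m m', m < m' /\ val f n m p /\ val g n m' p).

(* [[ f << g ]] =
   [[ exists N, forall n >= N, f n <= g n ]] /\ [[ forall N, exists n >= N, f n < g n ]] *)
Definition val_ll (f g : name) : cset :=
  bmeet
    (bsup (fun N => binf (fun n => if Nat.leb N n then val_le f g n else bone)))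
    (binf (fun N => bsup (fun n => if Nat.leb N n then val_lt f g n else (fun _ => False)))).

End Cohen.

Arguments cle {K}.

Definition strict_well_order {W : Type} (lt : W -> W -> Prop) : Prop :=
  (forall x, ~ lt x x) /\
  (forall x y z, lt x y -> lt y z -> lt x z) /\
  (forall x y, lt x y \/ x = y \/ lt y x) /\
  well_founded lt.

Definition injective {A B : Type} (f : A -> B) : Prop :=
  forall x y, f x = f y -> x = y.

(* (W, lt) has order type (c^+), c = 2^aleph_0 computed in the ground model:
   every proper initial segment has size <= c, while W itself has size > c. *)
Definition is_c_plus {W : Type} (lt : W -> W -> Prop) : Prop :=
  strict_well_order lt /\
  (forall a : W, exists e : {b : W | lt b a} -> (nat -> bool), injective e) /\
  ~ (exists e : W -> (nat -> bool), injective e).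

(* Main.v *)
Require Import Defs.
From Stdlib Require Import List Arith Lia Classical ClassicalEpsilon FunctionalExtensionality ProofIrrelevance PropExtensionality Cantor.
Import ListNotations.

Definition cid := constructive_indefinite_description.
Definition xm := excluded_middle_informative.

Definition countable (X : Type) := exists f : X -> nat, forall x y, f x = f y -> x = y.

Lemma countable_nat : countable nat.
Proof. exists (fun n => n); auto. Qed.

Lemma countable_prod X Y : countable X -> countable Y -> countable (X * Y).
Proof.
  intros [f Hf] [g Hg]. exists (fun p => to_nat (f (fst p), g (snd p))).
  intros [x1 y1] [x2 y2] H.
  apply (f_equal of_nat) in H. rewrite !cancel_of_to in H. inversion H.
  f_equal; auto.
Qed.

Lemma countable_sum X Y : countable X -> countable Y -> countable (X + Y).
Proof.
  intros [f Hf] [g Hg].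
  exists (fun s => match s with inl x => to_nat (0, f x) | inr y => to_nat (1, g y) end).
  intros [x1|y1] [x2|y2] H; apply (f_equal of_nat) in H; rewrite !cancel_of_to in H;
    inversion H; f_equal; auto.
Qed.

Lemma countable_list X : countable X -> countable (list X).
Proof.
  intros [f Hf].
  exists (fix F l := match l with [] => 0 | x :: l' => S (to_nat (f x, F l')) end).
  induction x as [|a l IH]; intros [|b l'] H; try discriminate; auto.
  cbn -[to_nat] in H. apply Nat.succ_inj in H. apply (f_equal of_nat) in H. rewrite !cancel_of_to in H.
  inversion H. f_equal; auto.
Qed.

Lemma countable_bool : countable bool.
Proof. exists (fun b : bool => if b then 1 else 0). intros [] [] H; auto; discriminate. Qed.

Lemma countable_option X : countable X -> countable (option X).
Proof.
  intros [f Hf]. exists (fun o => match o with None => 0 | Some x => S (f x) end).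
  intros [x|] [y|] H; try discriminate; auto. injection H as H. f_equal; auto.
Qed.

Section Conds.
Variable K : Type.

Lemma cond_ext (p q : cond K) : (forall k, proj1_sig p k = proj1_sig q k) -> p = q.
Proof.
  destruct p as [f hf], q as [g hg]; simpl; intro H.
  assert (f = g) by (apply functional_extensionality; auto). subst.
  f_equal. apply proof_irrelevance.
Qed.

Lemma cle_refl (p : cond K) : cle p p.
Proof. unfold cle; auto. Qed.

Lemma cle_trans (p q r : cond K) : cle p q -> cle q r -> cle p r.
Proof. unfold cle; auto. Qed.

Lemma reg_open (U : cset K) : open_set K (reg K U).
Proof. intros p q Hp Hqp r Hrq. apply Hp. eapply cle_trans; eauto. Qed.

Lemma ro_open U : regular_open K U -> open_set K U.
Proof. intros [H _]; exact H. Qed.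

Definition inr_ (e : nat -> option K) (k : K) := exists i, e i = Some k.

Definition restrict (e : nat -> option K) (q : cond K) : cond K.
Proof.
  refine (exist _ (fun k => if xm (inr_ e k) then proj1_sig q k else None) _).
  destruct (proj2_sig q) as [s Hs]. exists s. intros k.
  destruct (xm _); [apply Hs | congruence].
Defined.

Definition cjoin (r q : cond K) : cond K.
Proof.
  refine (exist _ (fun k => match proj1_sig r k with Some b => Some b | None => proj1_sig q k end) _).
  destruct (proj2_sig r) as [s1 H1]. destruct (proj2_sig q) as [s2 H2].
  exists (s1 ++ s2). intros k Hk. apply in_or_app.
  destruct (proj1_sig r k) eqn:E. left; apply H1; congruence. right; apply H2; auto.
Defined.

Definition supp (U : cset K) (e : nat -> option K) := forall q, U q <-> U (restrict e q).

Definition closed_for (U : cset K) (e : nat -> option K) :=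
  forall s : cond K, (forall k, proj1_sig s k <> None -> inr_ e k) ->
  (exists r, cle r s /\ forall r', cle r' r -> ~ U r') ->
  exists r, cle r s /\ (forall r', cle r' r -> ~ U r') /\ (forall k, proj1_sig r k <> None -> inr_ e k).

Lemma restrict_le e q : cle q (restrict e q).
Proof. intros k b. simpl. destruct (xm _); congruence. Qed.

Lemma closed_supp U e : regular_open K U -> closed_for U e -> supp U e.
Proof.
  intros [Hop Hreg] Hcl q. split.
  - intros HU. destruct (classic (U (restrict e q))) as [H|H]; auto. exfalso.
    assert (Hnr : ~ reg K U (restrict e q)) by (intro; apply H, Hreg; auto).
    unfold reg in Hnr. apply not_all_ex_not in Hnr. destruct Hnr as [q' Hq'].
    apply imply_to_and in Hq'. destruct Hq' as [Hq'le Hq'].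
    destruct (Hcl (restrict e q)) as [r [Hrs [Hbad Hdom]]].
    + intros k Hk. simpl in Hk. destruct (xm (inr_ e k)); [auto | congruence].
    + exists q'. split; auto. intros r' Hr' HU'. apply Hq'. exists r'; auto.
    + apply (Hbad (cjoin r q)).
      * intros k b Hk. simpl. rewrite Hk. auto.
      * apply (Hop q); auto. intros k b Hk. simpl.
        destruct (proj1_sig r k) eqn:E.
        -- assert (Hs : proj1_sig (restrict e q) k = Some b).
           { simpl. destruct (xm (inr_ e k)) as [Hi|Hi]; auto.
             exfalso. apply Hi, Hdom. congruence. }
           apply Hrs in Hs. congruence.
        -- auto.
  - intros HU. apply (Hop _ q HU). apply restrict_le.
Qed.

End Conds.
Section Supp.
Variable K : Type.
Variable f : name K.

Lemma union_enum {X} (cX : countable X) (g : X -> nat -> option K) :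
  exists e : nat -> option K, forall k, inr_ K e k <-> exists x, inr_ K (g x) k.
Proof.
  destruct cX as [enc Henc].
  exists (fun j => let (u, i) := of_nat j in
     match xm (exists x, enc x = u) with left h => g (proj1_sig (cid _ _ h)) i | right _ => None end).
  intros k; split.
  - intros [j Hj]. destruct (of_nat j) as [u i]. destruct (xm _) as [h|h]; [|discriminate].
    exists (proj1_sig (cid _ _ h)), i. exact Hj.
  - intros [x [i Hi]]. exists (to_nat (enc x, i)). rewrite cancel_of_to.
    destruct (xm _) as [h|h].
    + destruct (cid _ _ h) as [x' Hx']. simpl. apply Henc in Hx'. subst; auto.
    + exfalso; apply h; eauto.
Qed.

Definition spec (e : nat -> option K) (l : list (nat * bool)) (r : cond K) :=
  forall i b k, In (i, b) l -> e i = Some k -> proj1_sig r k = Some b.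
Definition bad n m (r : cond K) := forall r', cle r' r -> ~ val K f n m r'.

Lemma spec_list e (s : cond K) : (forall k, proj1_sig s k <> None -> inr_ K e k) ->
  exists l, (forall r, cle r s -> spec e l r) /\ (forall r, spec e l r -> cle r s).
Proof.
  intros Hd. destruct (proj2_sig s) as [ls Hls].
  assert (H : forall ls0, exists l,
    (forall i b, In (i, b) l -> exists k, e i = Some k /\ proj1_sig s k = Some b) /\
    (forall k b, In k ls0 -> proj1_sig s k = Some b -> exists i, In (i, b) l /\ e i = Some k)).
  { induction ls0 as [|k ls0 [l [H1 H2]]].
    - exists []. split; [intros ? ? []|intros ? ? []].
    - destruct (proj1_sig s k) as [b|] eqn:E.
      + destruct (Hd k) as [i Hi]; [congruence|].
        exists ((i, b) :: l). split.
        * intros i' b' [Heq|Hin]; [inversion Heq; subst; eauto|eauto].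
        * intros k' b' [Hk|Hk] Hs.
          -- subst. exists i. split; [left; congruence|auto].
          -- destruct (H2 k' b' Hk Hs) as [i' [? ?]]. exists i'; split; [right|]; auto.
      + exists l. split; auto. intros k' b' [Hk|Hk] Hs; [subst; congruence|eauto]. }
  destruct (H ls) as [l [H1 H2]]. exists l. split.
  - intros r Hr i b k Hin Hi. destruct (H1 i b Hin) as [k' [Hk' Hs]].
    rewrite Hi in Hk'. inversion Hk'; subst. apply Hr; auto.
  - intros r Hr k b Hs. destruct (H2 k b) as [i [Hin Hi]]; auto.
    apply Hls; congruence. eapply Hr; eauto.
Qed.

Lemma choose_dom (P : cond K -> Prop) : exists E : nat -> option K,
  (exists r, P r) -> exists r, P r /\ forall k, proj1_sig r k <> None -> inr_ K E k.
Proof.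
  destruct (classic (exists r, P r)) as [[r Hr]|Hn].
  - destruct (proj2_sig r) as [ls Hls]. exists (fun j => nth_error ls j).
    intros _. exists r. split; auto. intros k Hk. apply Hls in Hk.
    apply In_nth_error in Hk. destruct Hk as [j Hj]. exists j; auto.
  - exists (fun _ => None). intros H; contradiction.
Qed.

Lemma step_ex e : exists e', (forall k, inr_ K e k -> inr_ K e' k) /\
  forall n m s, (forall k, proj1_sig s k <> None -> inr_ K e k) ->
  (exists r, cle r s /\ bad n m r) ->
  exists r, cle r s /\ bad n m r /\ (forall k, proj1_sig r k <> None -> inr_ K e' k).
Proof.
  pose (G := fun p : nat * nat * list (nat * bool) =>
    proj1_sig (cid _ _ (choose_dom (fun r => spec e (snd p) r /\ bad (fst (fst p)) (snd (fst p)) r)))).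
  assert (HG : forall p, (exists r, spec e (snd p) r /\ bad (fst (fst p)) (snd (fst p)) r) ->
     exists r, (spec e (snd p) r /\ bad (fst (fst p)) (snd (fst p)) r) /\
       forall k, proj1_sig r k <> None -> inr_ K (G p) k).
  { intros p. unfold G. exact (proj2_sig (cid _ _ (choose_dom (fun r => spec e (snd p) r /\ bad (fst (fst p)) (snd (fst p)) r)))). }
  destruct (union_enum (X := (nat * nat * list (nat * bool)) + nat)
     (countable_sum _ _ (countable_prod _ _ (countable_prod _ _ countable_nat countable_nat)
        (countable_list _ (countable_prod _ _ countable_nat countable_bool))) countable_nat)
     (fun x => match x with inl p => G p | inr _ => e end)) as [e' He'].
  exists e'. split.
  - intros k Hk. apply He'. exists (inr 0). exact Hk.
  - intros n m s Hd [r0 [Hr0 Hb0]].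
    destruct (spec_list e s Hd) as [l [Hl1 Hl2]].
    destruct (HG (n, m, l)) as [r [[Hsp Hb] Hdom]]. { exists r0; simpl; auto. }
    simpl in *. exists r. split; [auto|split; auto].
    intros k Hk. apply He'. exists (inl (n, m, l)). auto.
Qed.

Definition Step e := proj1_sig (cid _ _ (step_ex e)).

Fixpoint Eit t : nat -> option K := match t with 0 => fun _ => None | S t => Step (Eit t) end.

Lemma Eit_mono t d k : inr_ K (Eit t) k -> inr_ K (Eit (d + t)) k.
Proof.
  induction d; simpl; auto. intros H. unfold Step.
  apply (proj1 (proj2_sig (cid _ _ (step_ex (Eit (d + t)))))). auto.
Qed.

Lemma Eit_mono' t t' k : t <= t' -> inr_ K (Eit t) k -> inr_ K (Eit t') k.
Proof. intros H. replace t' with ((t' - t) + t) by lia. apply Eit_mono. Qed.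

Lemma Eit_closed t n m s : (forall k, proj1_sig s k <> None -> inr_ K (Eit t) k) ->
  (exists r, cle r s /\ bad n m r) ->
  exists r, cle r s /\ bad n m r /\ (forall k, proj1_sig r k <> None -> inr_ K (Eit (S t)) k).
Proof. simpl. unfold Step. apply (proj2 (proj2_sig (cid _ _ (step_ex (Eit t))))). Qed.

Lemma closure_ex : exists e, forall n m, closed_for K (val K f n m) e.
Proof.
  destruct (union_enum countable_nat Eit) as [ef Hef].
  exists ef. intros n m s Hd Hex.
  destruct (proj2_sig s) as [ls Hls].
  assert (HT : forall ls0, exists T, forall k, In k ls0 -> proj1_sig s k <> None -> inr_ K (Eit T) k).
  { induction ls0 as [|k ls0 [T HT]].
    - exists 0; intros ? [].
    - destruct (classic (proj1_sig s k <> None)) as [Hk|Hk].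
      + destruct (proj1 (Hef k) (Hd k Hk)) as [t Ht].
        exists (max t T). intros k' [Heq|Hin] Hk'.
        * subst. eapply Eit_mono'; [|eauto]. lia.
        * eapply Eit_mono'; [|eauto]. lia.
      + exists T. intros k' [Heq|Hin] Hk'; [subst; contradiction|auto]. }
  destruct (HT ls) as [T HTT].
  destruct (Eit_closed T n m s) as [r [Hr [Hb Hdom]]].
  - intros k Hk. apply HTT; auto.
  - exact Hex.
  - exists r. split; auto. split; auto. intros k Hk. apply Hef. exists (S T). auto.
Qed.

Definition injz (e : nat -> option K) i := if xm (exists j, j < i /\ e j = e i) then None else e i.

Lemma injz_range e k : inr_ K (injz e) k <-> inr_ K e k.
Proof.
  split.
  - intros [i Hi]. unfold injz in Hi. destruct (xm _); [discriminate|]. exists i; auto.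
  - intros [i Hi]. revert Hi. induction i as [i IH] using lt_wf_ind. intros Hi.
    destruct (classic (exists j, j < i /\ e j = e i)) as [[j [Hj Hje]]|Hn].
    + apply (IH j Hj). congruence.
    + exists i. unfold injz. destruct (xm _); [contradiction|auto].
Qed.

Lemma injz_inj e i j k : injz e i = Some k -> injz e j = Some k -> i = j.
Proof.
  unfold injz. intros Hi Hj.
  destruct (xm (exists j0, j0 < i /\ e j0 = e i)) as [?|Ni]; [discriminate|].
  destruct (xm (exists j0, j0 < j /\ e j0 = e j)) as [?|Nj]; [discriminate|].
  destruct (lt_eq_lt_dec i j) as [[H|H]|H]; auto.
  - exfalso; apply Nj. exists i. split; congruence.
  - exfalso; apply Ni. exists j. split; congruence.
Qed.

Lemma name_support : exists e : nat -> option K,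
  (forall i j k, e i = Some k -> e j = Some k -> i = j) /\
  forall n m q, val K f n m q <-> val K f n m (restrict K e q).
Proof.
  destruct closure_ex as [e0 He0]. exists (injz e0). split.
  - apply injz_inj.
  - intros n m. apply closed_supp. apply val_ro.
    intros s Hd Hex. destruct (He0 n m s) as [r [H1 [H2 H3]]].
    + intros k Hk. apply injz_range; auto.
    + exact Hex.
    + exists r. split; auto. split; auto. intros k Hk. apply injz_range; auto.
Qed.

End Supp.
Section Asym.
Variable K : Type.

Lemma val_open (f : name K) n m : open_set K (val K f n m).
Proof. apply ro_open, val_ro. Qed.

Lemma reg_at (U : cset K) p : reg K U p -> exists q, cle q p /\ U q.
Proof. intros H. destruct (H p (cle_refl K p)) as [r [? ?]]. eauto. Qed.

Lemma ll_asym (f g : name K) p : val_ll K f g p -> val_ll K g f p -> False.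
Proof.
  intros [A1 A2] [B1 _].
  destruct (reg_at _ _ A1) as [q1 [Hq1 [N1 HN1]]].
  destruct (B1 q1 Hq1) as [q2 [Hq2 [N2 HN2]]].
  assert (Hq2p : cle q2 p) by (eapply cle_trans; eauto).
  destruct (A2 (N1 + N2) q2 Hq2p) as [q3 [Hq3 [n Hn]]].
  destruct (Nat.leb (N1 + N2) n) eqn:Ele; [|contradiction].
  apply Nat.leb_le in Ele.
  destruct (reg_at _ _ Hn) as [q4 [Hq4 [m [m' [Hmm' [Hf Hg]]]]]].
  specialize (HN2 n). cbv beta in HN2. assert (E2 : Nat.leb N2 n = true) by (apply Nat.leb_le; lia).
  rewrite E2 in HN2.
  assert (Hq42 : cle q4 q2) by (eapply cle_trans; eauto).
  destruct (HN2 q4 Hq42) as [q5 [Hq5 [m2 [m2' [Hm2 [Hg2 Hf2]]]]]].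
  assert (Hf5 : val K f n m q5) by (eapply val_open; eauto).
  assert (Hg5 : val K g n m' q5) by (eapply val_open; eauto).
  destruct (Nat.eq_dec m m2') as [E1|E1]; [|exact (val_disj K f n m m2' q5 E1 Hf5 Hf2)].
  destruct (Nat.eq_dec m' m2) as [E3|E3]; [|exact (val_disj K g n m' m2 q5 E3 Hg5 Hg2)].
  lia.
Qed.

Variable pi : K -> K.
Hypothesis pi_inv : forall k, pi (pi k) = k.

Definition act (q : cond K) : cond K.
Proof.
  refine (exist _ (fun k => proj1_sig q (pi k)) _).
  destruct (proj2_sig q) as [ls Hls]. exists (map pi ls).
  intros k Hk. rewrite <- (pi_inv k). apply in_map. auto.
Defined.

Lemma act_invol q : act (act q) = q.
Proof. apply cond_ext. intros k. simpl. rewrite pi_inv. auto. Qed.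

Lemma act_cle q q' : cle q' q -> cle (act q') (act q).
Proof. intros H k b. simpl. auto. Qed.

Definition Tr (U V : cset K) := forall q, U q <-> V (act q).

Lemma Tr_reg U V : Tr U V -> Tr (reg K U) (reg K V).
Proof.
  intros H q. split.
  - intros HU q'' Hq''. destruct (HU (act q'')) as [r [Hr Ur]].
    { rewrite <- (act_invol q). apply act_cle; auto. }
    exists (act r). split.
    + rewrite <- (act_invol q''). apply act_cle; auto.
    + apply H; auto.
  - intros HV q'' Hq''. destruct (HV (act q'')) as [r [Hr Vr]].
    { apply act_cle; auto. }
    exists (act r). split.
    + rewrite <- (act_invol q''). apply act_cle; auto.
    + apply H. rewrite act_invol. auto.
Qed.

Lemma Tr_bsup (U V : nat -> cset K) : (forall i, Tr (U i) (V i)) -> Tr (bsup K U) (bsup K V).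
Proof.
  intros H. apply Tr_reg. intros q. split; intros [i Hi]; exists i; apply H; auto.
Qed.

Lemma Tr_binf (U V : nat -> cset K) : (forall i, Tr (U i) (V i)) -> Tr (binf K U) (binf K V).
Proof. intros H q. split; intros Hi i; apply H; auto. Qed.

Lemma Tr_bmeet U U' V V' : Tr U V -> Tr U' V' -> Tr (bmeet K U U') (bmeet K V V').
Proof. intros H H' q. unfold bmeet. specialize (H q). specialize (H' q). tauto. Qed.

Lemma Tr_ll (f g f' g' : name K) :
  (forall n m, Tr (val K f n m) (val K f' n m)) ->
  (forall n m, Tr (val K g n m) (val K g' n m)) ->
  Tr (val_ll K f g) (val_ll K f' g').
Proof.
  intros Hf Hg. unfold val_ll. apply Tr_bmeet.
  - apply Tr_bsup. intros N. apply Tr_binf. intros n. destruct (Nat.leb N n).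
    + unfold val_le. apply Tr_reg. intros q. split.
      * intros [m [m' [? [? ?]]]]. exists m, m'. rewrite <- (Hf n m q), <- (Hg n m' q). auto.
      * intros [m [m' [? [? ?]]]]. exists m, m'. rewrite (Hf n m q), (Hg n m' q). auto.
    + intros q. unfold bone. tauto.
  - apply Tr_binf. intros N. apply Tr_bsup. intros n. destruct (Nat.leb N n).
    + unfold val_lt. apply Tr_reg. intros q. split.
      * intros [m [m' [? [? ?]]]]. exists m, m'. rewrite <- (Hf n m q), <- (Hg n m' q). auto.
      * intros [m [m' [? [? ?]]]]. exists m, m'. rewrite (Hf n m q), (Hg n m' q). auto.
    + intros q. tauto.
Qed.

End Asym.
Definition small_on {X : Type} (P : X -> Prop) :=
  exists g : X -> nat -> bool, forall x y, P x -> P y -> g x = g y -> x = y.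

Lemma small_mono {X} (P Q : X -> Prop) : small_on P -> (forall x, Q x -> P x) -> small_on Q.
Proof. intros [g Hg] H. exists g. auto. Qed.

Definition il (a b : nat -> bool) : nat -> bool :=
  fun n => if Nat.even n then a (Nat.div2 n) else b (Nat.div2 n).

Lemma il_inj a b a' b' : il a b = il a' b' -> a = a' /\ b = b'.
Proof.
  intros H. split; apply functional_extensionality; intros n.
  - assert (E := f_equal (fun h => h (2 * n)) H). unfold il in E. cbv beta in E.
    rewrite Nat.even_even, Nat.div2_double in E. exact E.
  - assert (E := f_equal (fun h => h (2 * n + 1)) H). unfold il in E. cbv beta in E.
    rewrite Nat.even_odd, Nat.div2_odd' in E. exact E.
Qed.

Lemma pigeon {X Y} (P : X -> Prop) (Q : Y -> Prop) (f : X -> Y) :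
  (forall x, P x -> Q (f x)) -> small_on Q ->
  (forall y, Q y -> small_on (fun x => P x /\ f x = y)) -> small_on P.
Proof.
  intros HPQ [h Hh] Hfib.
  assert (HG : forall y, exists g : X -> nat -> bool, Q y ->
     forall x x', (P x /\ f x = y) -> (P x' /\ f x' = y) -> g x = g x' -> x = x').
  { intros y. destruct (classic (Q y)) as [Hy|Hy].
    - destruct (Hfib y Hy) as [g Hg]. exists g. auto.
    - exists (fun _ _ => false). intros; contradiction. }
  pose (G := fun y => proj1_sig (cid _ _ (HG y))).
  exists (fun x => il (h (f x)) (G (f x) x)).
  intros x x' Px Px' E. apply il_inj in E. destruct E as [E1 E2].
  apply Hh in E1; auto. rewrite <- E1 in E2.
  exact (proj2_sig (cid _ _ (HG (f x))) (HPQ x Px) x x' (conj Px eq_refl) (conj Px' (eq_sym E1)) E2).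
Qed.

Lemma small_prop : small_on (fun _ : nat -> Prop => True).
Proof.
  exists (fun P n => if xm (P n) then true else false).
  intros P P' _ _ E. apply functional_extensionality; intros n.
  apply propositional_extensionality.
  assert (E' := f_equal (fun h => h n) E). cbv beta in E'.
  destruct (xm (P n)), (xm (P' n)); try discriminate; tauto.
Qed.

Lemma small_nn : small_on (fun _ : nat -> (nat -> bool) => True).
Proof.
  exists (fun F n => F (fst (of_nat n)) (snd (of_nat n))).
  intros F F' _ _ E. apply functional_extensionality; intros x.
  apply functional_extensionality; intros y.
  assert (E' := f_equal (fun h => h (to_nat (x, y))) E). cbv beta in E'.
  rewrite cancel_of_to in E'. exact E'.
Qed.

Lemma small_range {Y} (e : nat -> Y) : small_on (fun y => exists j, e j = y).
Proof.
  exists (fun y n => if xm (e n = y) then true else false).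
  intros y y' [j Hj] _ E. assert (E' := f_equal (fun h => h j) E). cbv beta in E'.
  destruct (xm (e j = y)), (xm (e j = y')); try discriminate; congruence.
Qed.

Lemma small_add_pt {X} (P : X -> Prop) x0 : small_on P -> small_on (fun x => P x \/ x = x0).
Proof.
  intros [g Hg].
  exists (fun x n => match n with 0 => if xm (x = x0) then true else false | S n' => g x n' end).
  intros x y Hx Hy E.
  assert (E0 := f_equal (fun h => h 0) E). cbv beta in E0.
  destruct (xm (x = x0)) as [ex|nx], (xm (y = x0)) as [ey|ny]; try discriminate; try congruence.
  apply Hg; [destruct Hx; [auto|contradiction]|destruct Hy; [auto|contradiction]|].
  apply functional_extensionality; intros n.
  exact (f_equal (fun h => h (S n)) E).
Qed.

Section WO.
Variable W : Type.
Variable lt : W -> W -> Prop.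
Hypothesis HW : is_c_plus lt.

Definition le x y := lt x y \/ x = y.

Lemma lt_irr x : ~ lt x x.
Proof. destruct HW as [[H _] _]. apply H. Qed.
Lemma lt_trans x y z : lt x y -> lt y z -> lt x z.
Proof. destruct HW as [[_ [H _]] _]. apply H. Qed.
Lemma lt_tri x y : lt x y \/ x = y \/ lt y x.
Proof. destruct HW as [[_ [_ [H _]]] _]. apply H. Qed.
Lemma lt_wf : well_founded lt.
Proof. destruct HW as [[_ [_ [_ H]]] _]. apply H. Qed.

Lemma not_lt_le x y : ~ lt x y -> le y x.
Proof. intros H. destruct (lt_tri x y) as [?|[?|?]]; [contradiction|right; auto|left; auto]. Qed.

Lemma le_lt_trans x y z : le x y -> lt y z -> lt x z.
Proof. intros [H|H] H'; [eapply lt_trans; eauto|subst; auto]. Qed.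
Lemma lt_le_trans x y z : lt x y -> le y z -> lt x z.
Proof. intros H [H'|H']; [eapply lt_trans; eauto|subst; auto]. Qed.
Lemma le_trans x y z : le x y -> le y z -> le x z.
Proof. intros [H|H] H'; [left; eapply lt_le_trans; eauto|subst; auto]. Qed.

Lemma wf_least (P : W -> Prop) : (exists w, P w) -> exists w, P w /\ forall w', P w' -> ~ lt w' w.
Proof.
  intros [w Hw]. revert Hw. induction w as [w IH] using (well_founded_ind lt_wf).
  intros Hw. destruct (classic (exists w', P w' /\ lt w' w)) as [[w' [H1 H2]]|Hn].
  - apply (IH w' H2 H1).
  - exists w. split; auto. intros w' H1 H2. apply Hn; eauto.
Qed.

Lemma least_unique (P : W -> Prop) w1 w2 : P w1 -> (forall w', P w' -> ~ lt w' w1) ->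
  P w2 -> (forall w', P w' -> ~ lt w' w2) -> w1 = w2.
Proof.
  intros H1 M1 H2 M2. destruct (lt_tri w1 w2) as [?|[?|?]]; auto.
  - exfalso; exact (M2 w1 H1 H).
  - exfalso; exact (M1 w2 H2 H).
Qed.

Lemma seg_small a : small_on (fun b => lt b a).
Proof.
  destruct HW as [_ [Hs _]]. destruct (Hs a) as [e He].
  exists (fun b => match xm (lt b a) with left h => e (exist _ b h) | right _ => fun _ => false end).
  intros x y Hx Hy E.
  destruct (xm (lt x a)) as [hx|]; [|contradiction].
  destruct (xm (lt y a)) as [hy|]; [|contradiction].
  apply He in E. exact (f_equal (@proj1_sig _ _) E).
Qed.

Lemma W_not_small : ~ small_on (fun _ : W => True).
Proof.
  destruct HW as [_ [_ Hn]]. intros [g Hg]. apply Hn. exists g. intros x y. apply Hg; auto.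
Qed.

Lemma bounded (P : W -> Prop) : small_on P -> exists g, forall x, P x -> le x g.
Proof.
  intros Hs. apply NNPP. intros Hn.
  assert (H : forall g, exists x, P x /\ lt g x).
  { intros g. apply NNPP. intros Hx. apply Hn. exists g. intros x Px.
    apply not_lt_le. intros Hl. apply Hx. eauto. }
  pose (F := fun g => proj1_sig (cid _ _ (H g))).
  apply W_not_small. apply (pigeon _ P F).
  - intros x _. exact (proj1 (proj2_sig (cid _ _ (H x)))).
  - exact Hs.
  - intros y _. apply small_mono with (P := fun b => lt b y); [apply seg_small|].
    intros x [_ Ex]. rewrite <- Ex. exact (proj2 (proj2_sig (cid _ _ (H x)))).
Qed.

Lemma le_small b : small_on (fun w => le w b).
Proof. apply small_mono with (P := fun w => lt w b \/ w = b); [apply small_add_pt, seg_small|]. auto. Qed.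

End WO.
Section Main.
Variable K W : Type.
Variable lt : W -> W -> Prop.
Hypothesis HW : is_c_plus lt.
Variable F : W -> name K.
Variable p : cond K.

Notation leW := (le W lt).

Definition e (a : W) : nat -> option K := proj1_sig (cid _ _ (name_support K (F a))).
Lemma einj a i j k : e a i = Some k -> e a j = Some k -> i = j.
Proof. exact (proj1 (proj2_sig (cid _ _ (name_support K (F a)))) i j k). Qed.
Lemma esupp a n m q : val K (F a) n m q <-> val K (F a) n m (restrict K (e a) q).
Proof. exact (proj2 (proj2_sig (cid _ _ (name_support K (F a)))) n m q). Qed.

Definition rk_ex a i := wf_least W lt HW (fun b => exists j, e b j = e a i) (ex_intro _ a (ex_intro _ i eq_refl)).
Definition r a i : W := proj1_sig (cid _ _ (rk_ex a i)).
Lemma r_in a i : exists j, e (r a i) j = e a i.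
Proof. exact (proj1 (proj2_sig (cid _ _ (rk_ex a i)))). Qed.
Lemma r_min a i b : (exists j, e b j = e a i) -> ~ lt b (r a i).
Proof. exact (proj2 (proj2_sig (cid _ _ (rk_ex a i))) b). Qed.
Lemma r_eq a i b j : e a i = e b j -> r a i = r b j.
Proof.
  intros E. apply (least_unique W lt HW (fun w => exists j', e w j' = e a i)).
  - apply r_in.
  - apply r_min.
  - destruct (r_in b j) as [j' Hj']. exists j'. congruence.
  - intros w' Hw'. apply r_min. destruct Hw' as [j' Hj']. exists j'. congruence.
Qed.
Lemma r_le a i : leW (r a i) a.
Proof. apply (not_lt_le W lt HW). apply r_min. eauto. Qed.

Definition Lp : list K := proj1_sig (cid _ _ (proj2_sig p)).
Lemma HLp k : proj1_sig p k <> None -> In k Lp.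
Proof. exact (proj2_sig (cid _ _ (proj2_sig p)) k). Qed.

Definition sfun (s : list (option bool)) i := nth i s None.
Definition matches (e0 : nat -> option K) s (q : cond K) :=
  (forall i k, e0 i = Some k -> proj1_sig q k = sfun s i) /\
  (forall k, proj1_sig q k <> None -> inr_ K e0 k).

Lemma matches_uniq e0 s q1 q2 : matches e0 s q1 -> matches e0 s q2 -> q1 = q2.
Proof.
  intros [A1 B1] [A2 B2]. apply cond_ext. intros k.
  destruct (classic (inr_ K e0 k)) as [[i Hi]|Hn].
  - rewrite (A1 _ _ Hi), (A2 _ _ Hi). auto.
  - destruct (proj1_sig q1 k) eqn:E1; [exfalso; apply Hn, B1; congruence|].
    destruct (proj1_sig q2 k) eqn:E2; [exfalso; apply Hn, B2; congruence|]. auto.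
Qed.

Definition Idx := ((nat * nat * list (option bool)) + ((nat * nat) + ((nat * nat) + nat)))%type.

Definition Qa (a : W) (x : Idx) : Prop :=
  match x with
  | inl (n, m, s) => exists q, matches (e a) s q /\ val K (F a) n m q
  | inr (inl (i, j)) => lt (r a i) (r a j)
  | inr (inr (inl (i, k))) => exists y, nth_error Lp k = Some y /\ e a i = Some y
  | inr (inr (inr i)) => e a i = None
  end.

Lemma cIdx : countable Idx.
Proof.
  apply countable_sum.
  - apply countable_prod. apply countable_prod; apply countable_nat.
    apply countable_list, countable_option, countable_bool.
  - apply countable_sum. apply countable_prod; apply countable_nat.
    apply countable_sum. apply countable_prod; apply countable_nat. apply countable_nat.
Qed.

Definition enc : Idx -> nat := proj1_sig (cid _ _ cIdx).
Lemma enc_inj x y : enc x = enc y -> x = y.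
Proof. exact (proj2_sig (cid _ _ cIdx) x y). Qed.

Definition tau a : nat -> Prop := fun u => exists x, enc x = u /\ Qa a x.

Lemma tau_eq a b : tau a = tau b -> forall x, Qa a x <-> Qa b x.
Proof.
  intros E x. split; intros H.
  - assert (H' : tau b (enc x)) by (rewrite <- E; exists x; auto).
    destruct H' as [y [Hy Qy]]. apply enc_inj in Hy. subst; auto.
  - assert (H' : tau a (enc x)) by (rewrite E; exists x; auto).
    destruct H' as [y [Hy Qy]]. apply enc_inj in Hy. subst; auto.
Qed.

Lemma class_ex : exists t, ~ small_on (fun a => tau a = t).
Proof.
  apply NNPP. intros Hn. apply (W_not_small W lt HW).
  apply (pigeon _ (fun _ => True) tau).
  - auto.
  - apply small_prop.
  - intros y _. apply small_mono with (P := fun a => tau a = y).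
    + apply NNPP. intros Hy. apply Hn. eauto.
    + intros x [_ Hx]; auto.
Qed.

Definition tt0 := proj1_sig (cid _ _ class_ex).
Definition C a := tau a = tt0.
Lemma C_big : ~ small_on C.
Proof. exact (proj2_sig (cid _ _ class_ex)). Qed.
Lemma CQ a b x : C a -> C b -> (Qa a x <-> Qa b x).
Proof. unfold C. intros Ha Hb. apply tau_eq. congruence. Qed.

Lemma C_ne : exists a, C a.
Proof.
  apply NNPP. intros Hn. apply C_big. exists (fun _ _ => false).
  intros x y Hx. exfalso; eauto.
Qed.
Definition a0 := proj1_sig (cid _ _ C_ne).
Lemma Ca0 : C a0.
Proof. exact (proj2_sig (cid _ _ C_ne)). Qed.

Definition I i := exists g, forall c, C c -> leW (r c i) g.

Lemma const_I j : (forall c, C c -> e c j = e a0 j) -> I j.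
Proof.
  intros H. exists (r a0 j). intros c Hc. right. apply r_eq. auto.
Qed.

Definition gam i : W := match xm (I i) with left h => proj1_sig (cid _ _ h) | right _ => a0 end.
Lemma gam_spec i : I i -> forall c, C c -> leW (r c i) (gam i).
Proof.
  intros Hi. unfold gam. destruct (xm (I i)) as [h|]; [|contradiction].
  exact (proj2_sig (cid _ _ h)).
Qed.

Lemma beta_ex : exists bt, forall i, I i -> forall c, C c -> leW (r c i) bt.
Proof.
  destruct (bounded W lt HW _ (small_range gam)) as [bt Hbt].
  exists bt. intros i Hi c Hc. eapply (le_trans W lt HW). apply gam_spec; eauto.
  apply Hbt. eauto.
Qed.
Definition bt := proj1_sig (cid _ _ beta_ex).
Lemma bt_spec i : I i -> forall c, C c -> leW (r c i) bt.
Proof. exact (proj2_sig (cid _ _ beta_ex) i). Qed.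

Definition B x := exists w, leW w bt /\ exists j, e w j = x.

Lemma B_small : small_on B.
Proof.
  assert (H : forall x, exists w, B x -> leW w bt /\ exists j, e w j = x).
  { intros x. destruct (classic (B x)) as [[w Hw]|Hn].
    - exists w; auto.
    - exists bt. intros; contradiction. }
  pose (fw := fun x => proj1_sig (cid _ _ (H x))).
  apply (pigeon B (fun w => leW w bt) fw).
  - intros x Bx. exact (proj1 (proj2_sig (cid _ _ (H x)) Bx)).
  - apply le_small; auto.
  - intros y _. apply small_mono with (P := fun x => exists j, e y j = x); [apply small_range|].
    intros x [Bx Ex]. rewrite <- Ex. exact (proj2 (proj2_sig (cid _ _ (H x)) Bx)).
Qed.

Definition code := proj1_sig (cid _ _ B_small).
Lemma code_inj x y : B x -> B y -> code x = code y -> x = y.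
Proof. exact (proj2_sig (cid _ _ B_small) x y). Qed.

Definition phi c : nat -> nat -> bool := fun i => if xm (I i) then code (e c i) else (fun _ => false).

Definition nnenc := proj1_sig (cid _ _ small_nn).
Lemma nnenc_inj x y : nnenc x = nnenc y -> x = y.
Proof. intros. apply (proj2_sig (cid _ _ small_nn)); auto. Qed.

Lemma pair_ex : exists a b, C a /\ C b /\ lt a b /\ phi a = phi b /\
  forall j, ~ I j -> lt a (r b j).
Proof.
  apply NNPP. intros Hno.
  destruct (classic (exists j, ~ I j)) as [Hj|Hall].
  - destruct (wf_least W lt HW (fun w => exists j, ~ I j /\ r a0 j = w)) as [w0 [[j0 [Hj0 Ew0]] Hmin]].
    { destruct Hj as [j Hj]. eauto. }
    assert (Hm : forall c, C c -> forall j, ~ I j -> leW (r c j0) (r c j)).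
    { intros c Hc j Hj'. apply (not_lt_le W lt HW). intros Hl.
      assert (Hl0 : lt (r a0 j) (r a0 j0)).
      { apply (CQ a0 c (inr (inl (j, j0))) Ca0 Hc). exact Hl. }
      apply (Hmin (r a0 j)); eauto. congruence. }
    pose (M := fun m => C m /\ forall m', C m' -> phi m' = phi m -> ~ lt m' m).
    assert (Ms : small_on M).
    { exists (fun m => nnenc (phi m)). intros x y [Cx Mx] [Cy My] E.
      apply nnenc_inj in E.
      destruct (lt_tri W lt HW x y) as [H|[H|H]]; auto.
      - exfalso. exact (My x Cx E H).
      - exfalso. exact (Mx y Cy (eq_sym E) H). }
    destruct (bounded W lt HW M Ms) as [g Hg].
    apply Hj0. exists g. intros c Hc.
    destruct (wf_least W lt HW (fun m => C m /\ phi m = phi c)) as [m [[Cm Em] Mm]]; [eauto|].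
    assert (HM : M m).
    { split; auto. intros m' Cm' E'. apply Mm. split; auto. congruence. }
    eapply (le_trans W lt HW); [|apply Hg; exact HM].
    apply (not_lt_le W lt HW). intros Hl. apply Hno. exists m, c.
    split; auto. split; auto. split.
    + eapply (lt_le_trans W lt HW); [exact Hl|apply r_le].
    + split; auto. intros j Hj'. eapply (lt_le_trans W lt HW); [exact Hl|]. apply Hm; auto.
  - apply C_big. exists (fun c => nnenc (phi c)). intros x y Cx Cy E.
    apply nnenc_inj in E.
    destruct (lt_tri W lt HW x y) as [H|[H|H]]; auto.
    + exfalso. apply Hno. exists x, y. repeat split; auto.
      intros j Hj; exfalso; apply Hall; eauto.
    + exfalso. apply Hno. exists y, x. repeat split; auto.
      intros j Hj; exfalso; apply Hall; eauto.
Qed.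


Definition pa := proj1_sig (cid _ _ pair_ex).
Lemma pb_ex : exists b, C pa /\ C b /\ lt pa b /\ phi pa = phi b /\ forall j, ~ I j -> lt pa (r b j).
Proof. exact (proj2_sig (cid _ _ pair_ex)). Qed.
Definition pb := proj1_sig (cid _ _ pb_ex).
Lemma pab : C pa /\ C pb /\ lt pa pb /\ phi pa = phi pb /\ forall j, ~ I j -> lt pa (r pb j).
Proof. exact (proj2_sig (cid _ _ pb_ex)). Qed.

Lemma A1 i : I i -> e pa i = e pb i.
Proof.
  intros Hi. destruct pab as [Ca [Cb [_ [Ephi _]]]].
  assert (E := f_equal (fun h => h i) Ephi). unfold phi in E. cbv beta in E.
  destruct (xm (I i)); [|contradiction].
  apply code_inj; auto.
  - exists (r pa i). split; [apply bt_spec; auto|apply r_in].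
  - exists (r pb i). split; [apply bt_spec; auto|apply r_in].
Qed.

Lemma A2 j : ~ I j -> forall i, e pa i <> e pb j.
Proof.
  intros Hj i E. destruct pab as [_ [_ [_ [_ Hl]]]]. specialize (Hl j Hj).
  rewrite <- (r_eq pa i pb j E) in Hl.
  apply (lt_irr W lt HW pa). eapply (lt_le_trans W lt HW); [exact Hl|apply r_le].
Qed.

Lemma none_I c0 j : C c0 -> e c0 j = None -> I j.
Proof.
  intros C0 E. apply const_I. intros c Hc.
  assert (H1 : Qa c (inr (inr (inr j)))) by (apply (CQ c0 c _ C0 Hc); exact E).
  assert (H2 : Qa a0 (inr (inr (inr j)))) by (apply (CQ c0 a0 _ C0 Ca0); exact E).
  simpl in H1, H2. congruence.
Qed.

Lemma dom_I c0 j y : C c0 -> e c0 j = Some y -> In y Lp -> I j.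
Proof.
  intros C0 E Hy. apply In_nth_error in Hy. destruct Hy as [idx Hidx].
  assert (Q0 : Qa c0 (inr (inr (inl (j, idx))))) by (simpl; eauto).
  apply const_I. intros c Hc.
  assert (H1 := proj1 (CQ c0 c _ C0 Hc) Q0).
  assert (H2 := proj1 (CQ c0 a0 _ C0 Ca0) Q0).
  simpl in H1, H2. destruct H1 as [y1 [Hy1 E1]]. destruct H2 as [y2 [Hy2 E2]].
  congruence.
Qed.

Lemma A4 j : ~ I j -> (exists x, e pa j = Some x) /\ (exists y, e pb j = Some y).
Proof.
  intros Hj. destruct pab as [Ca [Cb _]]. split.
  - destruct (e pa j) as [x|] eqn:E; [eauto|]. exfalso; apply Hj; exact (none_I pa j Ca E).
  - destruct (e pb j) as [x|] eqn:E; [eauto|]. exfalso; apply Hj; exact (none_I pb j Cb E).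
Qed.

Definition mva k := exists j, ~ I j /\ e pa j = Some k.
Definition mvb k := exists j, ~ I j /\ e pb j = Some k.
Definition pi (k : K) : K :=
  match xm (mva k) with
  | left h => match e pb (proj1_sig (cid _ _ h)) with Some y => y | None => k end
  | right _ => match xm (mvb k) with
     | left h => match e pa (proj1_sig (cid _ _ h)) with Some y => y | None => k end
     | right _ => k end end.

Lemma pi_spec j x y : ~ I j -> e pa j = Some x -> e pb j = Some y -> pi x = y /\ pi y = x.
Proof.
  intros Hj Ea Eb. split.
  - unfold pi. destruct (xm (mva x)) as [h|h]; [|exfalso; apply h; exists j; auto].
    pose proof (proj2_sig (cid _ _ h)) as [Hj' Ej']. cbv beta in Ej'.
    rewrite (einj pa _ j x Ej' Ea), Eb. auto.
  - unfold pi. destruct (xm (mva y)) as [h|h].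
    + exfalso. destruct h as [j' [_ Ej']]. apply (A2 j Hj j'). congruence.
    + destruct (xm (mvb y)) as [h'|h']; [|exfalso; apply h'; exists j; auto].
      pose proof (proj2_sig (cid _ _ h')) as [_ Ej']. cbv beta in Ej'.
      rewrite (einj pb _ j y Ej' Eb), Ea. auto.
Qed.

Lemma pi_fix k : ~ mva k -> ~ mvb k -> pi k = k.
Proof.
  intros Na Nb. unfold pi. destruct (xm (mva k)); [contradiction|].
  destruct (xm (mvb k)); [contradiction|auto].
Qed.

Lemma Pi1 i : e pb i = option_map pi (e pa i).
Proof.
  destruct (classic (I i)) as [Hi|Hi].
  - rewrite <- (A1 i Hi). destruct (e pa i) as [x|] eqn:Ex; simpl; auto. f_equal. symmetry.
    apply pi_fix.
    + intros [j [Hj Ej]]. apply Hj. rewrite (einj pa j i x Ej Ex). auto.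
    + intros [j [Hj Ej]]. apply Hj. assert (Eb : e pb i = Some x) by (rewrite <- (A1 i Hi); auto).
      rewrite (einj pb j i x Ej Eb). auto.
  - destruct (A4 i Hi) as [[x Ex] [y Ey]]. rewrite Ex, Ey. simpl. f_equal. symmetry.
    exact (proj1 (pi_spec i x y Hi Ex Ey)).
Qed.

Lemma pi_invol k : pi (pi k) = k.
Proof.
  destruct (classic (mva k)) as [[j [Hj Ej]]|Na].
  - destruct (A4 j Hj) as [_ [y Ey]]. destruct (pi_spec j k y Hj Ej Ey) as [H1 H2].
    rewrite H1. auto.
  - destruct (classic (mvb k)) as [[j [Hj Ej]]|Nb].
    + destruct (A4 j Hj) as [[x Ex] _]. destruct (pi_spec j x k Hj Ex Ej) as [H1 H2].
      rewrite H2. auto.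
    + rewrite (pi_fix k Na Nb). apply pi_fix; auto.
Qed.

Lemma Pi3 k : proj1_sig p k <> None -> pi k = k.
Proof.
  intros Hk. destruct pab as [Ca [Cb _]]. apply pi_fix.
  - intros [j [Hj Ej]]. apply Hj. eapply dom_I; [exact Ca|exact Ej|apply HLp; auto].
  - intros [j [Hj Ej]]. apply Hj. eapply dom_I; [exact Cb|exact Ej|apply HLp; auto].
Qed.

Lemma act_p : act K pi pi_invol p = p.
Proof.
  apply cond_ext. intros k. simpl.
  destruct (classic (proj1_sig p k = None)) as [E|E].
  - destruct (classic (proj1_sig p (pi k) = None)) as [E'|E']; [congruence|].
    exfalso. assert (H := Pi3 _ E'). rewrite pi_invol in H. rewrite <- H in E'. contradiction.
  - rewrite Pi3; auto.
Qed.

Lemma Tr_ba n m : Tr K pi pi_invol (val K (F pb) n m) (val K (F pa) n m).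
Proof.
  intros q. destruct pab as [Ca [Cb _]].
  pose (pull := fun i => match e pb i with Some k => proj1_sig q k | None => None end).
  destruct (proj2_sig q) as [Lq HLq].
  assert (HN : exists N, forall k, In k Lq -> forall i, e pb i = Some k -> i < N).
  { clear HLq. induction Lq as [|k L [N HN]].
    - exists 0. intros ? [].
    - destruct (classic (exists i, e pb i = Some k)) as [[i0 Hi0]|Hn].
      + exists (max N (S i0)). intros k' [Hk|Hin] i Hi.
        * subst k'. rewrite (einj pb i i0 k Hi Hi0). lia.
        * specialize (HN k' Hin i Hi). lia.
      + exists N. intros k' [Hk|Hin] i Hi.
        * subst k'. exfalso; eauto.
        * eauto. }
  destruct HN as [N HN].
  assert (Hpull : forall i, N <= i -> pull i = None).
  { intros i Hi. unfold pull. destruct (e pb i) as [k|] eqn:Ek; auto.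
    destruct (proj1_sig q k) eqn:Eq; auto. exfalso.
    assert (Hin : In k Lq) by (apply HLq; congruence). specialize (HN k Hin i Ek). lia. }
  pose (s := map pull (seq 0 N)).
  assert (Hs : forall i, sfun s i = pull i).
  { intros i. unfold sfun, s. destruct (Nat.lt_ge_cases i N) as [H|H].
    - rewrite nth_indep with (d' := pull 0) by (rewrite length_map, length_seq; auto).
      rewrite map_nth, seq_nth; auto.
    - rewrite nth_overflow by (rewrite length_map, length_seq; lia). symmetry. apply Hpull; auto. }
  assert (Mb : matches (e pb) s (restrict K (e pb) q)).
  { split.
    - intros i k Ei. simpl. destruct (xm (inr_ K (e pb) k)) as [_|Hn]; [|exfalso; apply Hn; exists i; auto].
      rewrite Hs. unfold pull. rewrite Ei. auto.
    - intros k Hk. simpl in Hk. destruct (xm _); [auto|congruence]. }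
  assert (Ma : matches (e pa) s (restrict K (e pa) (act K pi pi_invol q))).
  { split.
    - intros i k Ei. simpl. destruct (xm (inr_ K (e pa) k)) as [_|Hn]; [|exfalso; apply Hn; exists i; auto].
      rewrite Hs. unfold pull. rewrite Pi1, Ei. simpl. auto.
    - intros k Hk. simpl in Hk. destruct (xm _); [auto|congruence]. }
  rewrite (esupp pb n m q), (esupp pa n m (act K pi pi_invol q)).
  split; intros H.
  - assert (Qb : Qa pb (inl (n, m, s))) by (simpl; eauto).
    apply (CQ pb pa _ Cb Ca) in Qb. simpl in Qb. destruct Qb as [q0 [M0 V0]].
    rewrite <- (matches_uniq _ _ _ _ M0 Ma). exact V0.
  - assert (Qa' : Qa pa (inl (n, m, s))) by (simpl; eauto).
    apply (CQ pa pb _ Ca Cb) in Qa'. simpl in Qa'. destruct Qa' as [q0 [M0 V0]].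
    rewrite <- (matches_uniq _ _ _ _ M0 Mb). exact V0.
Qed.

Lemma contra : (forall a b, lt a b -> val_ll K (F a) (F b) p) -> False.
Proof.
  intros H. destruct pab as [Ca [Cb [Hlt _]]].
  assert (H1 := H pa pb Hlt).
  assert (Tab : forall n m, Tr K pi pi_invol (val K (F pa) n m) (val K (F pb) n m)).
  { intros n m q. rewrite (Tr_ba n m (act K pi pi_invol q)), act_invol. tauto. }
  assert (T := Tr_ll K pi pi_invol (F pb) (F pa) (F pa) (F pb) Tr_ba Tab p).
  rewrite act_p in T.
  apply (ll_asym K (F pa) (F pb) p H1). apply T; auto.
Qed.

End Main.

Theorem lemma4 (K : Type) (W : Type) (lt : W -> W -> Prop) (HW : is_c_plus lt)
  (F : W -> name K) :
  forall p : cond K, ~ (forall a b, lt a b -> val_ll K (F a) (F b) p).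
Proof.
  intros p H. exact (contra K W lt HW F p H).
Qed.
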